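(* Let $\Gamma$ be the 3-hypergraph with vertex set $\mathbb{F}_7=\{0,1,\dots,6\}$ whose edges are the 14 triples $\{0,1,3\},\{0,2,6\},\{0,2,3\},\{0,4,5\},\{0,1,5\},\{0,4,6\},\{1,2,4\},\{2,3,5\},\{3,4,6\},\{1,5,6\},\{1,3,4\},\{2,4,5\},\{3,5,6\},\{1,2,6\}$ (this is one of the two orbits of $\mathrm{AGL}_1(7)=\{x\mapsto ax+b: a\in\mathbb{F}_7^*,b\in\mathbb{F}_7\}$ on 3-subsets). Then $\Gamma$ is set-homogeneous but not homogeneous.
   Context: A 3-hypergraph is a pair $(X,E)$ with $E$ a set of 3-element subsets (edges). It is set-homogeneous if for every $t\ge1$, whenever $U,V\subseteq X$ with $|U|=|V|=t$ carry isomorphic induced subhypergraphs there is an automorphism $g$ with $U^g=V$; homogeneous if every isomorphism between induced subhypergraphs extends to an automorphism. *)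

(* Defs.v *)
From mathcomp Require Import all_boot all_fingroup.
Set Implicit Arguments. Unset Strict Implicit. Unset Printing Implicit Defensive.

Definition is_3hypergraph (T : finType) (E : {set {set T}}) : Prop :=
  forall A, A \in E -> #|A| = 3.

Definition induced_iso (T : finType) (E : {set {set T}}) (U V : {set T})
  (f : T -> T) : Prop :=
  [/\ {in U &, injective f}, f @: U = V &
      forall A : {set T}, A \subset U -> (A \in E) = (f @: A \in E)].

Definition hautomorphism (T : finType) (E : {set {set T}}) (g : {perm T}) : Prop :=
  forall A : {set T}, (A \in E) = (g @: A \in E).

Definition set_homogeneous (T : finType) (E : {set {set T}}) : Prop :=
  forall U V : {set T}, 1 <= #|U| -> #|U| = #|V| ->
    (exists f, induced_iso E U V f) ->
    exists g : {perm T}, hautomorphism E g /\ g @: U = V.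

Definition homogeneous (T : finType) (E : {set {set T}}) : Prop :=
  forall (U V : {set T}) (f : T -> T), induced_iso E U V f ->
    exists g : {perm T}, hautomorphism E g /\ {in U, forall x, g x = f x}.

Definition gamma_triples : seq (nat * nat * nat) :=
  [:: (0,1,3); (0,2,6); (0,2,3); (0,4,5); (0,1,5); (0,4,6); (1,2,4);
      (2,3,5); (3,4,6); (1,5,6); (1,3,4); (2,4,5); (3,5,6); (1,2,6)].

Definition Gamma : {set {set 'I_7}} :=
  [set A : {set 'I_7} | A \in [seq [set (inord t.1.1 : 'I_7); inord t.1.2; inord t.2]
                                 | t <- gamma_triples]].

(* Main.v *)
Require Import Defs.
From mathcomp Require Import all_boot all_fingroup.
Set Implicit Arguments. Unset Strict Implicit. Unset Printing Implicit Defensive.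

Definition I7 := iota 0 7.
Definition bits (A : {set 'I_7}) : seq bool := [seq (inord i : 'I_7) \in A | i <- I7].

Lemma mem_bits (A : {set 'I_7}) (x : 'I_7) : (x \in A) = nth false (bits A) x.
Proof. by rewrite (nth_map 0) ?size_iota // nth_iota // add0n inord_val. Qed.

Lemma bits_inj (A B : {set 'I_7}) : bits A = bits B -> A = B.
Proof. by move=> E; apply/setP => x; rewrite !mem_bits E. Qed.

Lemma size_bits (A : {set 'I_7}) : size (bits A) = 7.
Proof. by rewrite size_map size_iota. Qed.

Lemma val_inord7 j : j < 7 -> \val (inord j : 'I_7) = j.
Proof. exact: inordK. Qed.

Lemma bits_set3 (x y z : 'I_7) :
  bits [set x; y; z] = [seq (i == val x) || (i == val y) || (i == val z) | i <- I7].
Proof.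
apply/eq_in_map => i; rewrite mem_iota => /andP[_ lt]; rewrite !inE -!val_eqE /= inordK //.
Qed.

Definition tb (t : nat * nat * nat) :=
  [seq (i == t.1.1) || (i == t.1.2) || (i == t.2) | i <- I7].
Definition edgeb bs := has (fun t => bs == tb t) gamma_triples.

Definition S3 (t : nat * nat * nat) : {set 'I_7} :=
  [set (inord t.1.1 : 'I_7); inord t.1.2; inord t.2].

Lemma triples_small : all (fun t : nat * nat * nat => [&& t.1.1 < 7, t.1.2 < 7 & t.2 < 7]) gamma_triples.
Proof. by []. Qed.

Lemma bitsS t : t \in gamma_triples -> bits (S3 t) = tb t.
Proof.
move=> Ht; have /and3P[h1 h2 h3] := allP triples_small t Ht.
by rewrite /S3 bits_set3 !val_inord7.
Qed.

Lemma mem_Gamma (A : {set 'I_7}) : (A \in Gamma) = edgeb (bits A).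
Proof.
rewrite inE; apply/mapP/hasP.
- by case=> t Ht ->; exists t => //; rewrite (bitsS Ht).
- by case=> t Ht /eqP E; exists t => //; apply: bits_inj; rewrite E bitsS.
Qed.

Lemma Gamma_map (A : {set 'I_7}) : (A \in Gamma) = (A \in map S3 gamma_triples).
Proof. by rewrite inE. Qed.

Definition imgbits (gf : nat -> nat) (bs : seq bool) :=
  [seq has (fun j => nth false bs j && (gf j == i)) I7 | i <- I7].

Lemma bits_img (g : 'I_7 -> 'I_7) (gf : nat -> nat) (A : {set 'I_7}) :
  (forall j, j < 7 -> val (g (inord j)) = gf j) ->
  bits (g @: A) = imgbits gf (bits A).
Proof.
move=> Hg; apply/eq_in_map => i; rewrite mem_iota => /andP[_ lt].
apply/imsetP/hasP.
- case=> y yA E; exists (val y); first by rewrite mem_iota /=.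
  rewrite -mem_bits yA /= -Hg // inord_val -E val_inord7 //.
- case=> j; rewrite mem_iota => /andP[_ lj] /andP[jA /eqP E]; exists (inord j).
  + by rewrite mem_bits val_inord7.
  + by apply: val_inj; rewrite Hg // E val_inord7.
Qed.

Definition subb (s u : seq bool) := all (fun i => nth false s i ==> nth false u i) I7.

Lemma sub_bits (A U : {set 'I_7}) : (A \subset U) = subb (bits A) (bits U).
Proof.
apply/subsetP/allP.
- move=> H i; rewrite mem_iota => /andP[_ lt]; apply/implyP => h.
  have := H (inord i); rewrite !mem_bits !inordK //; exact.
- move=> H x; rewrite !mem_bits; apply/implyP/H; rewrite mem_iota /=.
  exact: ltn_ord.
Qed.

Definition cntb bs := count (fun t => subb (tb t) bs) gamma_triples.
Definition cnt (U : {set 'I_7}) := #|[set A in Gamma | A \subset U]|.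

Lemma uniq_tb : uniq (map tb gamma_triples).
Proof. by vm_compute. Qed.

Lemma cnt_bits (U : {set 'I_7}) : cnt U = cntb (bits U).
Proof.
set P := fun t => subb (tb t) (bits U).
set L := map S3 (filter P gamma_triples).
have uL : uniq L.
  apply: (@map_uniq _ _ bits).
  have -> : map bits L = map tb (filter P gamma_triples).
    rewrite -map_comp; apply/eq_in_map => t; rewrite mem_filter => /andP[_ Ht].
    by rewrite /= bitsS.
  exact: subseq_uniq (map_subseq tb (filter_subseq P gamma_triples)) uniq_tb.
rewrite /cnt /cntb -size_filter -(size_map S3) -/L -(card_uniqP uL).
apply: eq_card => A; rewrite in_set Gamma_map; apply/andP/idP.
- case=> /mapP[t Ht ->]; rewrite sub_bits bitsS // => Hs.
  by apply/mapP; exists t => //; rewrite mem_filter Ht andbT.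
- case/mapP=> t; rewrite mem_filter => /andP[Hs Ht] ->; split.
  + by apply/mapP; exists t.
  + by rewrite sub_bits bitsS.
Qed.

Definition fval (p : nat * nat) (x : nat) := ((p.1 %% 6).+1 * x + p.2 %% 7) %% 7.

Lemma check_inj : all (fun a => all (fun b => all (fun x => all (fun y =>
  ((a.+1 * x + b) %% 7 == (a.+1 * y + b) %% 7) ==> (x == y)) I7) I7) I7) (iota 0 6).
Proof. by vm_compute. Qed.

Definition aglf (p : nat * nat) (x : 'I_7) : 'I_7 := inord (fval p x).

Lemma aglf_inj p : injective (aglf p).
Proof.
move=> x y /(congr1 val); rewrite /aglf !val_inord7 ?/fval ?ltn_pmod // => E.
apply: val_inj.
have ha : p.1 %% 6 \in iota 0 6 by rewrite mem_iota ltn_pmod.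
have hb : p.2 %% 7 \in I7 by rewrite mem_iota ltn_pmod.
have hx : val x \in I7 by rewrite mem_iota ltn_ord.
have hy : val y \in I7 by rewrite mem_iota ltn_ord.
have := allP (allP (allP (allP check_inj _ ha) _ hb) _ hx) _ hy.
by rewrite E eqxx /= => /eqP.
Qed.

Definition aglp p : {perm 'I_7} := perm (@aglf_inj p).

Lemma aglp_val p j : j < 7 -> \val (aglp p (inord j)) = fval p j.
Proof. by move=> lt; rewrite permE /aglf val_inord7 ?val_inord7 // /fval ltn_pmod. Qed.

Lemma bits_agl p (A : {set 'I_7}) : bits (aglp p @: A) = imgbits (fval p) (bits A).
Proof. by apply: bits_img => j lt; rewrite aglp_val. Qed.

Fixpoint allbits n : seq (seq bool) :=
  if n is n'.+1 then [seq b :: s | b <- [:: true; false], s <- allbits n'] else [:: [::]].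

Lemma allbitsP n bs : size bs = n -> bs \in allbits n.
Proof.
elim: n bs => [|n IH] [|b bs] //= [Hs].
rewrite !mem_cat; case: b; apply/orP; [left|right; apply/orP; left]; apply/mapP; exists bs => //; exact: IH.
Qed.

Lemma mem_allbits (A : {set 'I_7}) : bits A \in allbits 7.
Proof. exact/allbitsP/size_bits. Qed.

Definition aglL : seq (nat * nat) := [seq (a, b) | a <- iota 0 6, b <- I7].

Lemma check_aut : all (fun bs => all (fun p => edgeb bs == edgeb (imgbits (fval p) bs)) aglL) (allbits 7).
Proof. by vm_compute. Qed.

Definition hautomorphism' := hautomorphism Gamma.

Lemma aglp_aut p : p \in aglL -> hautomorphism Gamma (aglp p).
Proof.
move=> Hp A; rewrite !mem_Gamma bits_agl.
exact/eqP/(allP (allP check_aut _ (mem_allbits A)) _ Hp).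
Qed.

Definition inrep (k c i : nat) :=
  if (k == 3) && (c == 1) then i \in [:: 0; 1; 3]
  else if (k == 4) && (c == 1) then i \in [:: 0; 1; 2; 4]
  else i < k.
Definition rep (k c : nat) : {set 'I_7} := [set i : 'I_7 | inrep k c (val i)].
Definition repbits k c := [seq inrep k c i | i <- I7].

Lemma bits_rep k c : bits (rep k c) = repbits k c.
Proof.
by apply/eq_in_map => i; rewrite mem_iota => /andP[_ lt]; rewrite inE val_inord7.
Qed.

Lemma card_bits (A : {set 'I_7}) : #|A| = count id (bits A).
Proof.
rewrite cardE size_filter /bits count_map /I7 -val_enum_ord count_map enumT.
by apply: eq_count => x /=; rewrite inord_val.
Qed.

Lemma check_rep : all (fun bs => has (fun p => imgbits (fval p) bs == repbits (count id bs) (cntb bs)) aglL) (allbits 7).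
Proof. by vm_compute. Qed.

Lemma iso_cnt (T : finType) (E : {set {set T}}) (U V : {set T}) (f : T -> T) :
  induced_iso E U V f -> #|[set A in E | A \subset U]| = #|[set A in E | A \subset V]|.
Proof.
case=> finj fUV fE.
have inj : {in [set A in E | A \subset U] &, injective (fun A : {set T} => f @: A)}.
  move=> A B; rewrite !inE => /andP[_ AU] /andP[_ BU] eqAB.
  apply/setP => x; apply/idP/idP => xin.
  - have : f x \in f @: B by rewrite -eqAB imset_f.
    case/imsetP => y yB /(finj _ _ (subsetP AU x xin) (subsetP BU y yB)) ->.
    exact: yB.
  - have : f x \in f @: A by rewrite eqAB imset_f.
    case/imsetP => y yA /(finj _ _ (subsetP BU x xin) (subsetP AU y yA)) ->.
    exact: yA.
rewrite -(card_in_imset inj); apply: eq_card => B; apply/imsetP/idP.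
- case=> A; rewrite inE => /andP[AE AU] ->; rewrite inE -fE // AE -fUV.
  exact: imsetS.
- rewrite inE => /andP[BE BV].
  have key : f @: (U :&: f @^-1: B) = B.
    apply/setP => y; apply/imsetP/idP.
    + by case=> x; rewrite !inE => /andP[_ xB] ->.
    + move=> yB; have : y \in f @: U by rewrite fUV (subsetP BV).
      case/imsetP=> x xU Ey; exists x => //; by rewrite !inE xU -Ey yB.
  exists (U :&: f @^-1: B) => //.
  by rewrite inE subsetIl andbT fE ?subsetIl // key.
Qed.

Lemma aut_inv (g : {perm 'I_7}) : hautomorphism Gamma g -> hautomorphism Gamma (g^-1)%g.
Proof.
move=> hg A; rewrite (hg ((g^-1)%g @: A)) -imset_comp.
by rewrite (eq_imset _ (permKV g)) imset_id.
Qed.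

Lemma aut_mul (g h : {perm 'I_7}) :
  hautomorphism Gamma g -> hautomorphism Gamma h -> hautomorphism Gamma (g * h)%g.
Proof.
move=> hg hh A; rewrite hg hh -imset_comp.
by rewrite (eq_imset _ (fun x => esym (permM g h x))).
Qed.

Lemma set_homog : set_homogeneous Gamma.
Proof.
move=> U V _ hUV [f hf].
have hc : cnt U = cnt V := iso_cnt hf.
have [p1 Hp1 E1] := hasP (allP check_rep _ (mem_allbits U)).
have [p2 Hp2 E2] := hasP (allP check_rep _ (mem_allbits V)).
have R1 : aglp p1 @: U = rep #|U| (cnt U).
  by apply: bits_inj; rewrite bits_agl (eqP E1) bits_rep card_bits cnt_bits.
have R2 : aglp p2 @: V = rep #|V| (cnt V).
  by apply: bits_inj; rewrite bits_agl (eqP E2) bits_rep card_bits cnt_bits.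
exists (aglp p1 * (aglp p2)^-1)%g; split.
  exact: aut_mul (aglp_aut Hp1) (aut_inv (aglp_aut Hp2)).
rewrite (eq_imset _ (permM (aglp p1) (aglp p2)^-1%g)) imset_comp R1 hUV hc -R2.
by rewrite -imset_comp (eq_imset _ (permK (aglp p2))) imset_id.
Qed.

Lemma is3 : is_3hypergraph Gamma.
Proof.
move=> A; rewrite Gamma_map => /mapP[t Ht ->].
rewrite card_bits bitsS //.
have chk : all (fun t => count id (tb t) == 3) gamma_triples by vm_compute.
exact/eqP/(allP chk).
Qed.

Definition tp (x : nat) := if x == 1 then 2 else if x == 2 then 1 else x.
Definition f12 : {perm 'I_7} := tperm (inord 1) (inord 2).

Lemma f12_val j : j < 7 -> \val (f12 (inord j)) = tp j.
Proof.
move=> lt; rewrite /f12 /tp; case: tpermP => [E|E|h1 h2].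
- by have := congr1 val E; rewrite !val_inord7 // => ->.
- by have := congr1 val E; rewrite !val_inord7 // => ->.
- rewrite val_inord7 //; case: eqP => [e|_]; first by case: h1; apply: val_inj; rewrite !val_inord7.
  by case: eqP => [e|_] //; case: h2; apply: val_inj; rewrite !val_inord7.
Qed.

Definition U0 : {set 'I_7} := [set i : 'I_7 | val i < 4].
Definition ub := [seq i < 4 | i <- I7].

Lemma bits_U0 : bits U0 = ub.
Proof. by apply/eq_in_map => i; rewrite mem_iota => /andP[_ lt]; rewrite inE val_inord7. Qed.

Lemma check_iso : (imgbits tp ub == ub) &&
  all (fun bs => subb bs ub ==> (edgeb bs == edgeb (imgbits tp bs))) (allbits 7).
Proof. by vm_compute. Qed.

Definition edge3 x y z := edgeb [seq (i == x) || (i == y) || (i == z) | i <- I7].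

Lemma check_nonext : all (fun v4 => all (fun v5 => all (fun v6 =>
  ~~ [&& edge3 0 2 v5, edge3 2 1 v4, edge3 2 v5 v6 & uniq [:: 0; 2; 1; 3; v4; v5; v6]]) I7) I7) I7.
Proof. by vm_compute. Qed.

Lemma imset3 (g : 'I_7 -> 'I_7) (x y z : 'I_7) : g @: [set x; y; z] = [set g x; g y; g z].
Proof. by rewrite imsetU imsetU1 !imset_set1. Qed.

Lemma iso_f12 : induced_iso Gamma U0 U0 f12.
Proof.
have bi := fun A => @bits_img f12 tp A f12_val.
case/andP: check_iso => /eqP h1 /allP h2.
split.
- by move=> x y _ _; exact: perm_inj.
- by apply: bits_inj; rewrite bi bits_U0.
- move=> A; rewrite sub_bits bits_U0 => sA.
  by rewrite !mem_Gamma bi; apply/eqP; exact: (implyP (h2 _ (mem_allbits A)) sA).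
Qed.

Lemma not_homog : ~ homogeneous Gamma.
Proof.
move=> H; have [g [hg Hfg]] := H U0 U0 f12 iso_f12.
have gv : forall j, j < 4 -> g (inord j) = inord (tp j).
  move=> j lt; apply: val_inj; rewrite Hfg ?inE ?val_inord7 ?f12_val //;
    try exact: ltn_trans lt _.
  by rewrite /tp; case: eqP => //; case: eqP => // _ _; exact: ltn_trans lt _.
have g0 : g (inord 0) = inord 0 := gv 0 isT.
have g1 : g (inord 1) = inord 2 := gv 1 isT.
have g2 : g (inord 2) = inord 1 := gv 2 isT.
have g3 : g (inord 3) = inord 3 := gv 3 isT.
have e1 : edge3 0 2 (val (g (inord 5))).
  have := hg [set inord 0; inord 1; inord 5].
  rewrite !mem_Gamma imset3 g0 g1 !bits_set3 !val_inord7 //.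
have e2 : edge3 2 1 (val (g (inord 4))).
  have := hg [set inord 1; inord 2; inord 4].
  rewrite !mem_Gamma imset3 g1 g2 !bits_set3 !val_inord7 //.
have e3 : edge3 2 (val (g (inord 5))) (val (g (inord 6))).
  have := hg [set inord 1; inord 5; inord 6].
  rewrite !mem_Gamma imset3 g1 !bits_set3 !val_inord7 //.
have u : uniq [seq val (g (inord j)) | j <- I7].
  rewrite map_inj_in_uniq ?iota_uniq // => x y; rewrite !mem_iota => /andP[_ hx] /andP[_ hy].
  by move/val_inj/perm_inj/(congr1 val); rewrite !val_inord7.
have u' : uniq [:: val (g (inord 0)); val (g (inord 1)); val (g (inord 2)); val (g (inord 3));
   val (g (inord 4)); val (g (inord 5)); val (g (inord 6))] := u.
rewrite g0 g1 g2 g3 !val_inord7 // in u'.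
have hI : forall x : 'I_7, val x \in I7 by move=> x; rewrite mem_iota ltn_ord.
have := allP (allP (allP check_nonext _ (hI (g (inord 4)))) _ (hI (g (inord 5)))) _ (hI (g (inord 6))).
by rewrite e1 e2 e3 u'.
Qed.

Theorem mainTheorem16 :
  is_3hypergraph Gamma /\ set_homogeneous Gamma /\ ~ homogeneous Gamma.
Proof. by split; [exact: is3 | split; [exact: set_homog | exact: not_homog]]. Qed.
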